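(* If $T\in\mathcal{T}$, then $C_T=\emptyset$, $A_T$ is an independent set, every vertex of $A_T$ has degree exactly $3$ in $T$, and $\nu(T)=|A_T|$. In particular $T$ is bipartite with partite sets $A_T$ and $D_T$.
   Context: Gallai–Edmonds sets: for a graph $G$, $D_G$ is the set of vertices not covered by at least one maximum matching, $A_G=N_G(D_G)\setminus D_G$, $C_G=V(G)\setminus(A_G\cup D_G)$. $\nu$ denotes the matching number, $n(T)$ the number of vertices. $\mathcal{T}$ is the set of all trees $T$ such that every vertex of $A_T$ has degree at most $3$ in $T$ and $\nu(T)=\frac{n(T)-1}{3}$. *)

(* Defs.v *)
From mathcomp Require Import all_boot.
Set Implicit Arguments. Unset Strict Implicit. Unset Printing Implicit Defensive.

Section Graph.
Variables (V : finType) (e : rel V).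

Definition simple_graph : Prop := symmetric e /\ irreflexive e.

Definition is_tree : Prop :=
  [/\ simple_graph,
      (forall x y : V, connect e x y) &
      (forall c : seq V, 3 <= size c -> ~~ ucycleb e c)].

Definition deg (v : V) : nat := #|[set u | e v u]|.

Definition is_matching (M : {set {set V}}) : bool :=
  [forall E in M, exists x, exists y, e x y && (E == [set x; y])] &&
  [forall E in M, forall F in M, (E != F) ==> [disjoint E & F]].

Definition nu : nat := \max_(M : {set {set V}} | is_matching M) #|M|.

Definition is_max_matching (M : {set {set V}}) : bool :=
  is_matching M && (#|M| == nu).

Definition covered (M : {set {set V}}) : {set V} := cover M.

Definition GE_D : {set V} :=
  [set v | [exists M, is_max_matching M && (v \notin covered M)]].
Definition GE_A : {set V} :=
  [set v | (v \notin GE_D) && [exists u in GE_D, e u v]].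
Definition GE_C : {set V} := ~: (GE_A :|: GE_D).

Definition independent (S : {set V}) : Prop :=
  forall x y, x \in S -> y \in S -> ~~ e x y.

Definition in_calT : Prop :=
  [/\ is_tree,
      (forall v, v \in GE_A -> deg v <= 3) &
      3 * nu + 1 = #|V|].

End Graph.

(* Main.v *)
Require Import Defs.
From mathcomp Require Import all_boot.
From Stdlib Require Import Lia.
From mathcomp Require Import zify.
Set Implicit Arguments. Unset Strict Implicit. Unset Printing Implicit Defensive.

Section Aux.
Variables (V : finType) (e : rel V).
Hypothesis esym : symmetric e.
Hypothesis eirr : irreflexive e.

Lemma disjP (A B : {set V}) :
  reflect (forall x, x \in A -> x \in B -> False) [disjoint A & B].
Proof.
rewrite disjoint_subset; apply: (iffP subsetP) => H x xA.
  by move=> xB; move: (H x xA); rewrite inE xB.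
by rewrite inE; apply/negP => /(H x xA).
Qed.

Lemma coverP (M : {set {set V}}) x :
  reflect (exists2 E, E \in M & x \in E) (x \in cover M).
Proof. by rewrite /cover; apply: (iffP bigcupP). Qed.

Lemma is_matchingP M : is_matching e M <->
  (forall E, E \in M -> exists x y, e x y /\ E = [set x; y]) /\
  (forall E F, E \in M -> F \in M -> E != F -> [disjoint E & F]).
Proof.
rewrite /is_matching; split.
  move=> /andP[/forallP H1 /forallP H2]; split.
    move=> E EM; move: (H1 E); rewrite EM /= => /existsP[x /existsP[y /andP[exy /eqP ->]]].
    by exists x, y.
  move=> E F EM FM EF; move: (H2 E); rewrite EM /= => /forallP/(_ F).
  by rewrite FM EF.
move=> [H1 H2]; apply/andP; split; apply/forallP => E; apply/implyP => EM.
  have [x [y [exy ->]]] := H1 E EM.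
  by apply/existsP; exists x; apply/existsP; exists y; rewrite exy eqxx.
apply/forallP => F; apply/implyP => FM; apply/implyP => EF; exact: H2.
Qed.

Variable M : {set {set V}}.
Hypothesis Mm : is_matching e M.

Lemma match_meet E F x : E \in M -> F \in M -> x \in E -> x \in F -> E = F.
Proof.
move=> EM FM xE xF; apply/eqP; apply/negPn/negP => EF.
have := (proj2 (proj1 (is_matchingP M) Mm)) E F EM FM EF.
by move/disjP/(_ x xE xF).
Qed.

Lemma edge_other E x : E \in M -> x \in E -> exists y, e x y /\ E = [set x; y].
Proof.
move=> EM xE; have [a [b [eab Eab]]] := (proj1 (proj1 (is_matchingP M) Mm)) E EM.
move: xE; rewrite Eab !inE => /orP[/eqP->|/eqP->]; first by exists b.
by exists a; rewrite setUC esym.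
Qed.

Lemma edge_in x y : [set x; y] \in M -> e x y.
Proof.
move=> H; have [z [exz Ez]] := edge_other H (set21 x y).
have : y \in [set x; z] by rewrite -Ez set22.
rewrite !inE => /orP[/eqP yx|/eqP->] //.
have : z \in [set x; y] by rewrite Ez set22.
by rewrite yx !inE orbb => /eqP zx; move: exz; rewrite zx eirr.
Qed.

Definition mate x := odflt x [pick y | [set x; y] \in M].

Lemma mate_eq x y : [set x; y] \in M -> mate x = y.
Proof.
move=> H; rewrite /mate; case: pickP => [y' H'|/(_ y)]; last by rewrite H.
have E := match_meet H H' (set21 x y) (set21 x y').
have : y' \in [set x; y] by rewrite E set22.
rewrite !inE => /orP[/eqP y'x|/eqP //].
by move: (edge_in H'); rewrite y'x eirr.
Qed.

Lemma mateP x : x \in cover M -> [set x; mate x] \in M.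
Proof.
move=> /coverP[E EM xE]; have [y [_ Exy]] := edge_other EM xE.
by rewrite (mate_eq (y:=y)) -?Exy.
Qed.

Lemma mate_sym x : x \in cover M -> mate (mate x) = x.
Proof. by move=> /mateP H; apply: mate_eq; rewrite setUC. Qed.

Lemma mate_cover x : x \in cover M -> mate x \in cover M.
Proof. by move=> /mateP H; apply/coverP; exists [set x; mate x]; rewrite ?set22. Qed.

Lemma card_cover : #|cover M| = 2 * #|M|.
Proof.
have tM : trivIset M.
  apply/trivIsetP => E F EM FM; exact: (proj2 (proj1 (is_matchingP M) Mm)).
rewrite -(eqP tM) mulnC -sum_nat_const; apply: eq_bigr => E EM.
have [x [y [exy ->]]] := (proj1 (proj1 (is_matchingP M) Mm)) E EM.
by rewrite cards2; case: eqP exy => // ->; rewrite eirr.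
Qed.

End Aux.

Section Sw.
Variables (V : finType) (e : rel V).
Hypothesis esym : symmetric e.
Hypothesis eirr : irreflexive e.

Definition inK (K : {set V}) : {set {set V}} := [set E : {set V} | E \subset K].
Definition sw (M N : {set {set V}}) (K : {set V}) := (M :\: inK K) :|: (N :&: inK K).

Lemma sw_matching (M N : {set {set V}}) (K : {set V}) : is_matching e M -> is_matching e N ->
  (forall E x, E \in M :\: N -> x \in E -> x \in K -> E \subset K) ->
  is_matching e (sw M N K).
Proof.
move=> /is_matchingP[M1 M2] /is_matchingP[N1 N2] cl; apply/is_matchingP; split.
  move=> E; rewrite /sw !inE; case/orP => /andP[]; [by move=> _ /M1|by move=> /N1].
have mix E F : E \in M -> E \notin inK K -> F \in N -> F \in inK K -> E != F ->
    [disjoint E & F].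
  move=> EM EK FN FK EF; apply/disjP => x xE xF.
  case EN: (E \in N).
    by move: (N2 E F EN FN EF) => /disjP/(_ x xE xF).
  have := cl E x; rewrite inE EN EM => /(_ erefl xE).
  move: FK; rewrite inE => /subsetP/(_ x xF) xK /(_ xK) EsK.
  by move: EK; rewrite inE EsK.
move=> E F; rewrite /sw !inE => /orP[/andP[EK EM]|/andP[EN EK]]
  /orP[/andP[FK FM]|/andP[FN FK]] EF.
- exact: M2.
- by apply: mix => //; rewrite inE.
- by rewrite disjoint_sym; apply: mix => //; rewrite ?inE // eq_sym.
- exact: N2.
Qed.

Lemma sw_card (M N : {set {set V}}) (K : {set V}) : #|sw M N K| + #|M :&: inK K| = #|M| + #|N :&: inK K|.
Proof.
have := cardsUI (M :\: inK K) (N :&: inK K).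
have -> : (M :\: inK K) :&: (N :&: inK K) = set0.
  by apply/setP => E; rewrite !inE; case: (E \subset K); rewrite ?andbF.
rewrite cards0 addn0 /sw => ->.
by rewrite -(cardsID (inK K) M); lia.
Qed.

Lemma max_exists : exists M, is_matching e M && (#|M| == nu e).
Proof.
have : 0 < #|[pred M : {set {set V}} | is_matching e M]|.
  apply/card_gt0P; exists set0; rewrite inE /is_matching.
  by apply/andP; split; apply/forallP => E; rewrite inE.
move/(eq_bigmax_cond (fun M : {set {set V}} => #|M|)) => [M HM Hnu].
by exists M; rewrite /nu; rewrite inE in HM; rewrite HM Hnu eqxx.
Qed.

Lemma matching_le M : is_matching e M -> #|M| <= nu e.
Proof. by move=> H; apply: leq_bigmax_cond. Qed.

Hypothesis acyc : forall c : seq V, 3 <= size c -> ~~ ucycleb e c.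

Lemma no_cycle (h : rel V) x y : (forall a b, h a b -> e a b) ->
  connect h x y -> e x y -> ~~ h x y -> x != y -> False.
Proof.
move=> he /connectP[p hp ->] exy nh nxy.
case: (shortenP hp) exy nh nxy => p' hp' up' _ exy nh nxy.
have sz : 2 <= size p'.
  move: hp' exy nh nxy; case: p' {up'} => [|z [|z2 q]] //=; first by rewrite eqxx.
  by rewrite andbT => ->.
apply/negP: (acyc (c := x :: p') sz); rewrite /ucycleb up' andbT /=.
by rewrite rcons_path esym exy (sub_path he hp').
Qed.

End Sw.

Section Ops.
Variables (V : finType) (e : rel V).
Hypothesis esym : symmetric e.
Hypothesis eirr : irreflexive e.

Lemma add_edge M x y : is_matching e M -> e x y -> x \notin cover M ->
  y \notin cover M -> is_matching e ([set x; y] |: M) /\ #|[set x; y] |: M| = #|M|.+1.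
Proof.
move=> Mm exy xM yM; have nin : [set x; y] \notin M.
  by apply/negP => H; move/negP: xM; apply; apply/coverP; exists [set x; y]; rewrite ?set21.
split; last by rewrite cardsU1 nin.
move/is_matchingP: Mm => [M1 M2]; apply/is_matchingP; split.
  by move=> E; rewrite !inE => /orP[/eqP->|/M1//]; exists x, y.
have aux F : F \in M -> [disjoint [set x; y] & F].
  move=> FM; apply/disjP => z; rewrite !inE => /orP[]/eqP-> zF.
    by move/negP: xM; apply; apply/coverP; exists F.
  by move/negP: yM; apply; apply/coverP; exists F.
move=> E F; rewrite !inE => /orP[/eqP->|EM] /orP[/eqP->|FM]; rewrite ?eqxx //.
- by move=> _; apply: aux.
- by move=> _; rewrite disjoint_sym; apply: aux.
- exact: M2.
Qed.

Lemma replace_edge M a x d : is_matching e M -> [set a; x] \in M -> e a d ->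
  d \notin cover M ->
  [/\ is_matching e ([set a; d] |: (M :\ [set a; x])),
      #|[set a; d] |: (M :\ [set a; x])| = #|M| &
      x \notin cover ([set a; d] |: (M :\ [set a; x]))].
Proof.
move=> Mm axM ead dM.
have M' : is_matching e (M :\ [set a; x]).
  move/is_matchingP: Mm => [M1 M2]; apply/is_matchingP; split.
    by move=> E; rewrite !inE => /andP[_ /M1].
  by move=> E F; rewrite !inE => /andP[_ EM] /andP[_ FM]; apply: M2.
have aM' : a \notin cover (M :\ [set a; x]).
  apply/negP => /coverP[E]; rewrite !inE => /andP[EN EM] aE.
  by move/negP: EN; apply; apply/eqP; apply: (match_meet Mm EM axM aE (set21 a x)).
have dM' : d \notin cover (M :\ [set a; x]).
  apply/negP => /coverP[E]; rewrite !inE => /andP[_ EM] dE.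
  by move/negP: dM; apply; apply/coverP; exists E.
have [H1 H2] := add_edge M' ead aM' dM'.
have xd : x != d.
  apply/negP => /eqP xd; move/negP: dM; apply; apply/coverP.
  by exists [set a; x]; rewrite // -xd set22.
have xa : x != a.
  by apply/negP => /eqP xa; move: (edge_in esym eirr Mm axM); rewrite xa eirr.
split => //.
  by rewrite H2 (cardsD1 [set a; x] M) axM.
apply/negP => /coverP[E]; rewrite !inE => /orP[/eqP->|/andP[EN EM]].
  by rewrite !inE (negbTE xa) (negbTE xd).
move=> xE; move/negP: EN; apply; apply/eqP.
exact: (match_meet Mm EM axM xE (set22 a x)).
Qed.

Definition hrel (M N : {set {set V}}) : rel V :=
  fun x y => (x != y) && ([set x; y] \in (M :\: N) :|: (N :\: M)).

Definition hcomp M N v := [set x | connect (hrel M N) v x].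

Lemma hrel_e M N a b : is_matching e M -> is_matching e N -> hrel M N a b -> e a b.
Proof.
move=> Mm Nm /andP[_]; rewrite !inE => /orP[/andP[_ H]|/andP[_ H]].
  have := @edge_in V e esym eirr M Mm a b H. done.
exact: (@edge_in V e esym eirr N Nm a b H).
Qed.

Lemma hcomp_closed M N v E x : is_matching e M -> is_matching e N ->
  E \in (M :\: N) :|: (N :\: M) -> x \in E -> x \in hcomp M N v -> E \subset hcomp M N v.
Proof.
move=> Mm Nm EH xE; rewrite inE => cx.
have [y [exy Exy]] : exists y, e x y /\ E = [set x; y].
  move: EH; rewrite !inE => /orP[/andP[_ EM]|/andP[_ EM]].
    exact: (@edge_other V e esym M Mm E x EM xE).
  exact: (@edge_other V e esym N Nm E x EM xE).
have hxy : hrel M N x y.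
  by rewrite /hrel -Exy EH andbT; apply/negP => /eqP xy; move: exy; rewrite xy eirr.
rewrite Exy subUset !sub1set !inE cx /=.
exact: connect_trans cx (connect1 hxy).
Qed.

End Ops.

Section Tree.
Variables (V : finType) (e : rel V).
Hypothesis esym : symmetric e.
Hypothesis eirr : irreflexive e.
Hypothesis acyc : forall c : seq V, 3 <= size c -> ~~ ucycleb e c.

Lemma Dmem v : v \in GE_D e ->
  exists M, [/\ is_matching e M, #|M| = nu e & v \notin cover M].
Proof.
rewrite inE => /existsP[M /andP[/andP[Mm /eqP cM] vM]].
by exists M; split.
Qed.

Lemma notD_cover M v : is_matching e M -> #|M| = nu e -> v \notin GE_D e ->
  v \in cover M.
Proof.
move=> Mm cM; apply: contraR => vM; rewrite inE; apply/existsP; exists M.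
by rewrite /is_max_matching Mm cM eqxx.
Qed.

Lemma sw_props M N v : is_matching e M -> #|M| = nu e ->
  is_matching e N -> #|N| = nu e -> v \notin cover N ->
  [/\ is_matching e (sw M N (hcomp M N v)), #|sw M N (hcomp M N v)| = nu e,
      v \notin cover (sw M N (hcomp M N v)),
      (forall E, E \in M -> ~~ (E \subset hcomp M N v) -> E \in sw M N (hcomp M N v)) &
      (forall z, z \notin hcomp M N v -> z \notin cover M ->
          z \notin cover (sw M N (hcomp M N v)))].
Proof.
move=> Mm cM Nm cN vN; set K := hcomp M N v.
have cl1 E x : E \in M :\: N -> x \in E -> x \in K -> E \subset K.
  move=> EH xE xK; apply: (hcomp_closed esym eirr Mm Nm _ xE xK); by rewrite inE EH.
have cl2 E x : E \in N :\: M -> x \in E -> x \in K -> E \subset K.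
  move=> EH xE xK; apply: (hcomp_closed esym eirr Mm Nm _ xE xK); by rewrite inE EH orbT.
have m1 := sw_matching Mm Nm cl1.
have m2 := sw_matching Nm Mm cl2.
have c1 := sw_card M N K; have c2 := sw_card N M K.
have l1 := matching_le m1; have l2 := matching_le m2.
have vK : v \in K by rewrite inE connect0.
split => //.
- lia.
- apply/negP => /coverP[E]; rewrite /sw !inE => /orP[/andP[EK EM]|/andP[EN _]] vE.
    case EN: (E \in N).
      by move/negP: vN; apply; apply/coverP; exists E.
    have := cl1 E v; rewrite inE EN EM => /(_ erefl vE vK) EK'.
    by move: EK; rewrite EK'.
  by move/negP: vN; apply; apply/coverP; exists E.
- by move=> E EM EK; rewrite /sw !inE EM EK.
- move=> z zK zM; apply/negP => /coverP[E]; rewrite /sw !inE =>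
    /orP[/andP[_ EM]|/andP[_ EK]] zE.
    by move/negP: zM; apply; apply/coverP; exists E.
  by move/negP: zK; apply; move/subsetP: EK; apply.
Qed.

Lemma L1 u v : u \in GE_D e -> v \in GE_D e -> e u v -> False.
Proof.
move=> /Dmem[Mu [Mum cMu uMu]] /Dmem[Mv [Mvm cMv vMv]] euv.
have [m' c' vM' keep notc] := sw_props Mum cMu Mvm cMv vMv.
have uK : u \notin hcomp Mu Mv v.
  apply/negP; rewrite inE => cvu.
  apply: (no_cycle esym acyc (h := hrel Mu Mv) _ cvu).
  - by move=> a b; exact: (@hrel_e V e esym eirr Mu Mv a b Mum Mvm).
  - by rewrite esym.
  - rewrite /hrel !inE; apply/negP => /andP[_ /orP[/andP[_ H]|/andP[_ H]]].
      by move/negP: uMu; apply; apply/coverP; exists [set v; u]; rewrite ?set22.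
    by move/negP: vMv; apply; apply/coverP; exists [set v; u]; rewrite ?set21.
  - by apply/negP => /eqP vu; move: euv; rewrite vu eirr.
have uM' := notc u uK uMu.
have [m'' c''] := add_edge m' euv uM' vM'.
by move: (matching_le m''); rewrite c'' c'; lia.
Qed.

Lemma L2 M a : is_matching e M -> #|M| = nu e -> a \in GE_A e ->
  mate M a \in GE_D e.
Proof.
move=> Mm cM; rewrite inE => /andP[aD /existsP[d /andP[dD eda]]].
have aM := notD_cover Mm cM aD.
have axM := mateP esym eirr Mm aM.
apply: contraT => xD.
have [N [Nm cN dN]] := Dmem dD.
have [m' c' dM' keep notc] := sw_props Mm cM Nm cN dN.
case aK: (a \in hcomp M N d).
  move: aK; rewrite inE => cda; exfalso.
  apply: (no_cycle esym acyc (h := hrel M N) _ cda eda).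
  - by move=> p q; exact: (@hrel_e V e esym eirr M N p q Mm Nm).
  - rewrite /hrel !inE; apply/negP => /andP[_ /orP[/andP[_ H]|/andP[_ H]]].
      have := mate_eq esym eirr Mm (x := a) (y := d); rewrite setUC => /(_ H) md.
      by move/negP: xD; rewrite md.
    by move/negP: dN; apply; apply/coverP; exists [set d; a]; rewrite ?set21.
  - by apply/negP => /eqP da; move: eda; rewrite da eirr.
have axM' : [set a; mate M a] \in sw M N (hcomp M N d).
  apply: keep => //; apply/negP => /subsetP/(_ a (set21 _ _)); by rewrite aK.
have ead : e a d by rewrite esym.
have [m2 c2 x2] := replace_edge esym eirr m' axM' ead dM'.
have := notD_cover m2 _ xD; rewrite c2 c' => /(_ erefl); by rewrite (negbTE x2).
Qed.

End Tree.

Section Rank.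
Variables (V : finType) (e : rel V) (r : V).
Hypothesis conn : forall v, connect e r v.

Lemma rank_ex : exists rk : V -> nat,
  forall v, v != r -> exists u, e u v && (rk u < rk v).
Proof.
pose P v n := [exists s : n.-tuple V, path e r s && (last r s == v)].
have ex v : exists n, P v n.
  have /connectP[s ps ->] := conn v; exists (size s); apply/existsP.
  by exists (in_tuple s); rewrite /= ps eqxx.
exists (fun v => ex_minn (ex v)) => v vr.
case: (ex_minnP (ex v)) => n /existsP[s /andP[ps /eqP ls]] mn.
move: ps ls (size_tuple s); case/lastP: (tval s) => [|q z] /=.
  by move=> _ rv; move: vr; rewrite rv eqxx.
rewrite rcons_path last_rcons size_rcons => /andP[pq eq] zv sz.
exists (last r q); rewrite -zv eq /=.
case: (ex_minnP (ex (last r q))) => m _ /(_ (size q)) H.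
apply: leq_ltn_trans (H _) _; last by rewrite -sz.
by apply/existsP; exists (in_tuple q); rewrite /= pq eqxx.
Qed.
End Rank.

Theorem lemma1 (V : finType) (e : rel V) :
  in_calT e ->
  [/\ GE_C e = set0,
      independent e (GE_A e),
      (forall v, v \in GE_A e -> deg e v = 3),
      nu e = #|GE_A e| &
      (* bipartite with partite sets A_T and D_T *)
      [/\ GE_A e :|: GE_D e = [set: V], [disjoint GE_A e & GE_D e] &
          forall x y, e x y ->
            (x \in GE_A e) && (y \in GE_D e) || (x \in GE_D e) && (y \in GE_A e)]].
Proof.
move=> [[[esym eirr] conn acyc] degA hn].
set A := GE_A e; set D := GE_D e.
have AnD a : a \in A -> a \notin D by rewrite inE => /andP[].
have DA v u : v \in D -> e v u -> u \in A.
  move=> vD evu; rewrite inE; apply/andP; split.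
    by apply/negP => uD; apply: (L1 esym eirr acyc vD uD evu).
  by apply/existsP; exists v; rewrite vD evu.
have [M /andP[Mm /eqP cM]] := max_exists e.
have key : 2 * nu e + #|D| = #|A| + #|V|.
  have c1 := card_cover eirr Mm.
  have c2 := cardsID D (cover M).
  have e3 : cover M :\: D = ~: D.
    apply/setP => x; rewrite in_setD in_setC; case xD: (x \in D) => //=.
    by apply: notD_cover Mm cM _; rewrite xD.
  have c4 := cardsC D.
  have e5 : cover M :&: D = [set mate M a | a in A].
    apply/setP => x; rewrite in_setI; apply/andP/imsetP.
      move=> [xM xD]; exists (mate M x); last by rewrite (mate_sym esym eirr Mm xM).
      apply: DA xD _; exact: (edge_in esym eirr Mm (mateP esym eirr Mm xM)).
    move=> [a aA ->]; split; last exact: (L2 esym eirr acyc Mm cM aA).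
    apply: (mate_cover esym eirr Mm).
    by apply: notD_cover Mm cM _; apply: AnD.
  have c6 : #|[set mate M a | a in A]| = #|A|.
    apply: card_in_imset => a b aA bA mab.
    have aM : a \in cover M by apply: notD_cover Mm cM _; apply: AnD.
    have bM : b \in cover M by apply: notD_cover Mm cM _; apply: AnD.
    by rewrite -(mate_sym esym eirr Mm aM) mab (mate_sym esym eirr Mm bM).
  rewrite -cM -c1 -c2 e3 e5 c6 -c4; lia.
have part : #|A| + #|D| + #|GE_C e| = #|V|.
  have := cardsC (A :|: D); rewrite /GE_C -/A -/D => <-.
  have := cardsUI A D.
  have -> : A :&: D = set0.
    by apply/setP => x; rewrite in_setI in_set0; apply/negP => /andP[/AnD/negP H] /H.
  rewrite cards0; lia.
have [r rD] : exists r, r \in D.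
  have : 0 < #|D| by lia.
  by move/card_gt0P => [r rD]; exists r.
have [rk rkP] := rank_ex (r := r) (conn r).
pose p v := odflt v [pick u | e u v && (rk u < rk v)].
have pP v : v != r -> e (p v) v && (rk (p v) < rk v).
  move=> vr; rewrite /p; case: pickP => [u //|H].
  by have [u /andP[eu lu]] := rkP v vr; move: (H u); rewrite eu lu.
have Ar a : a \in A -> a != r.
  by move=> aA; apply/negP => /eqP ar; move: (AnD a aA); rewrite ar rD.
pose ch a := [set v | (v != r) && (p v == a)].
pose N a := [set u | e a u].
have chN a : a \in A -> ch a :|: [set p a] \subset N a.
  move=> aA; apply/subsetP => v; rewrite !inE => /orP[/andP[vr /eqP pv]|/eqP->].
    by move: (pP v vr) => /andP[]; rewrite pv.
  by move: (pP a (Ar a aA)) => /andP[]; rewrite esym.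
have chp a : a \in A -> #|ch a :|: [set p a]| = (#|ch a|).+1.
  move=> aA; rewrite setUC cardsU1.
  suff -> : p a \notin ch a by [].
  rewrite !inE; apply/negP => /andP[par /eqP ppa].
  have := pP _ par; have := pP _ (Ar a aA); rewrite ppa => /andP[_ l1] /andP[_ l2].
  lia.
have f1 a : a \in A -> #|ch a| <= 2.
  move=> aA; have := subset_leq_card (chN a aA); rewrite chp //.
  have := degA a aA; rewrite /deg -/(N a); lia.
pose S := [set v | (v != r) && (p v \in A)].
have inS v : (v \in S) = (v != r) && (p v \in A) by rewrite /S inE.
have inch v a : (v \in ch a) = (v != r) && (p v == a) by rewrite /ch inE.
have f2 : #|S| = \sum_(a in A) #|ch a|.
  rewrite -sum1_card (partition_big p (fun a => a \in A)) /=; last first.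
    by move=> v; rewrite inE => /andP[].
  apply: eq_bigr => a aA; rewrite -sum1_card; apply: eq_bigl => v.
  rewrite inS inch; case: (p v =P a) => [->|]; by rewrite ?aA ?andbT ?andbF.
have f3 : D :\ r \subset S.
  apply/subsetP => v; rewrite in_setD1 inS => /andP[vr vD]; rewrite vr /=.
  apply: DA vD _; move: (pP v vr) => /andP[]; by rewrite esym.
have sumle : \sum_(a in A) #|ch a| <= \sum_(a in A) 2.
  by apply: leq_sum => a aA; apply: f1.
rewrite sum_nat_const in sumle.
have cD := cardsD1 r D; rewrite rD in cD.
have cS := subset_leq_card f3.
have nuA : nu e = #|A| by lia.
have C0 : #|GE_C e| = 0 by lia.
have SD : S = D :\ r.
  apply/eqP; rewrite eq_sym eqEcard f3 /=; lia.
have ch2 a : a \in A -> #|ch a| = 2.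
  have := leqif_sum (fun b bA => leqif_eq (f1 b bA)).
  move=> [_]; rewrite sum_nat_const -f2.
  have -> : #|S| == #|A| * 2 by apply/eqP; lia.
  move=> Hf aA; have Hf2 := Logic.eq_sym Hf; by move: Hf2 => /forall_inP/(_ a aA)/eqP.
have Neq a : a \in A -> N a = ch a :|: [set p a].
  move=> aA; apply/eqP; rewrite eq_sym eqEcard chN //= chp // ch2 //.
  by have := degA a aA; rewrite /deg -/(N a).
have indep : independent e A.
  move=> a b aA bA; apply/negP => eab.
  have : b \in N a by rewrite inE.
  rewrite Neq // in_setU inch in_set1 => /orP[/andP[br /eqP pb]|/eqP bp].
    have : b \in S by rewrite inS br pb aA.
    by rewrite SD in_setD1 (negbTE (AnD b bA)) andbF.
  have : a \in S by rewrite inS (Ar a aA) -bp bA.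
  by rewrite SD in_setD1 (negbTE (AnD a aA)) andbF.
have Ceq : GE_C e = set0 by apply: cards0_eq.
have AD : A :|: D = [set: V].
  by rewrite -[A :|: D]setCK -/A -/D; move: Ceq; rewrite /GE_C -/A -/D => ->; rewrite setC0.
split => //.
- move=> v vA; apply/eqP; rewrite /deg -/(N v) Neq // chp // ch2 //.
- split => //.
    by apply/disjP => x /AnD/negP.
  move=> x y exy.
  have : x \in A :|: D by rewrite AD inE.
  have : y \in A :|: D by rewrite AD inE.
  rewrite !in_setU => /orP[yA|yD] /orP[xA|xD].
  + by move: (indep x y xA yA); rewrite exy.
  + by rewrite xD yA orbT.
  + by rewrite xA yD.
  + by exfalso; apply: (L1 esym eirr acyc xD yD exy).
Qed.
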